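(* Under the standing assumptions (with $K\neq0$), suppose $\lambda_{\max}(M(0))<1$. Then there exists a unique $r^*\in(0,r_A)$ with $\lambda_{\max}(M(r^* ))=1$. Moreover $\lambda_{\max}(M(r))<1$ for $r\in[0,r^* )$ and $\lambda_{\max}(M(r))>1$ for $r\in(r^*,r_A)$; in the latter case there is no $\mathbf w\in\mathbb R^n$ with all $w_j>0$ and $\mathbf w^T(I-M(r))\ge\mathbf 0^T$.
   Context: Fix $n\ge 2$. $A$ and $K$ are $n\times n$ entrywise nonnegative real matrices, with $K$ not the zero matrix; $\delta_1,\dots,\delta_n\in(0,1]$, $D=K\,\mathrm{diag}(\delta_1,\dots,\delta_n)$, and $\tilde A=A+D$. $L=\mathrm{diag}(l_1,\dots,l_n)$ with all $l_j>0$. $B$ is an $n\times n$ entrywise nonnegative matrix with no zero column. Standing assumption: $\tilde A$ is irreducible and $\lambda_{\max}(\tilde A)<1$, where $\lambda_{\max}(X)$ denotes the spectral radius of a square matrix $X$. $r_A>0$ is defined by $\lambda_{\max}(\tilde A+r_AK)=1$. For $r\in[0,r_A)$, $M(r):=L[I-\tilde A-rK]^{-1}B$; note $M(0)=L(I-\tilde A)^{-1}B$. Vector inequalities are componentwise. *)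

(* Defs.v *)
From HB Require Import structures.
From mathcomp Require Import all_boot all_order all_algebra.
From mathcomp Require Import boolp classical_sets reals complex.
Set Implicit Arguments. Unset Strict Implicit. Unset Printing Implicit Defensive.
Import Order.TTheory GRing.Theory Num.Theory.
Local Open Scope ring_scope.

Definition cmod (R : realType) (z : R[i]) : R :=
  Num.sqrt (complex.Re z ^+ 2 + complex.Im z ^+ 2).

Definition cmx (R : realType) (n : nat) (A : 'M[R]_n) : 'M[R[i]]_n :=
  map_mx (fun x : R => (x%:C)%C) A.

Definition spec_rad (R : realType) (n : nat) (A : 'M[R]_n) : R :=
  sup [set r : R | exists z : R[i], eigenvalue (cmx A) z /\ r = cmod z]%classic.

Definition nonneg_mx (R : realType) (n : nat) (A : 'M[R]_n) : Prop :=
  forall i j, 0 <= A i j.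

Definition irreducible_mx (R : realType) (n : nat) (A : 'M[R]_n) : Prop :=
  forall i j, exists k : nat, 0 < (A ^+ k) i j.

Definition Mfun (R : realType) (n : nat) (L Atil K B : 'M[R]_n) (r : R)
  : 'M[R]_n :=
  L *m invmx (1%:M - Atil - r *: K) *m B.

(* Main.v *)
Require Import Defs.
From HB Require Import structures.
From mathcomp Require Import all_boot all_order all_algebra.
From mathcomp Require Import classical_sets reals complex.
From mathcomp Require Import ring lra.
Import Order.TTheory GRing.Theory Num.Theory.

Local Open Scope ring_scope.

Module Dev.
Set Implicit Arguments. Unset Strict Implicit.
Local Open Scope classical_set_scope.
Local Open Scope ring_scope.

Section Aux.
Variable R : realType.

Lemma exists_argmax (I : finType) (i0 : I) (F : I -> R) :
  exists i, forall j, F j <= F i.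
Proof.
case: (@arg_maxP _ _ I i0 xpredT F isT) => i _ Hi.
by exists i => j; apply: Hi.
Qed.

Lemma exists_argmin (I : finType) (i0 : I) (F : I -> R) :
  exists i, forall j, F i <= F j.
Proof.
have [i Hi] := exists_argmax i0 (fun j => - F j).
by exists i => j; move: (Hi j); rewrite lerN2.
Qed.

Lemma small_delta (I : finType) (g D : I -> R) (h : R) :
  (forall j, 0 < g j) -> (forall j, 0 <= D j) -> 0 < h ->
  exists d : R, [/\ 0 < d, d < h & forall j, d * D j < g j].
Proof.
move=> gp Dp hp.
case: (pickP (@predT I)) => [i0 _|e]; last first.
  by exists (h / 2); split => //; [lra|lra| move=> j; move: (e j)].
have [i Hi] := exists_argmin i0 (fun j => g j / (D j + 1)).
set m := g i / (D i + 1).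
have D1 : forall j, 0 < D j + 1 by move=> j; have := Dp j; lra.
have mp : 0 < m by rewrite /m divr_gt0.
exists (Num.min (h / 2) (m / 2)); split.
- by rewrite lt_min; apply/andP; split; lra.
- by rewrite gt_min; apply/orP; left; lra.
move=> j.
have h1 : Num.min (h / 2) (m / 2) <= m / 2 by rewrite ge_min lexx orbT.
have h2 : Num.min (h / 2) (m / 2) * D j <= m / 2 * D j by rewrite ler_wpM2r.
have h3 : m <= g j / (D j + 1) by apply: Hi.
have h4 : m * (D j + 1) <= g j.
  by rewrite -(ler_pM2r (D1 j)) in h3; rewrite (le_trans h3) // divfK // gt_eqF.
have := Dp j; nra.
Qed.
End Aux.
Section CM.
Variable R : realType.
Lemma cmodE (z : R[i]) : `|z| = (cmod z)%:C%C.
Proof. by rewrite normc_def. Qed.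
Lemma cmod_ge0 (z : R[i]) : 0 <= cmod z.
Proof. by rewrite /cmod sqrtr_ge0. Qed.
Lemma cmodM (z w : R[i]) : cmod (z * w) = cmod z * cmod w.
Proof. by apply: (@complexI R); rewrite rmorphM /= -!cmodE normrM. Qed.
Lemma cmod_eq0 (z : R[i]) : (cmod z == 0) = (z == 0).
Proof.
by rewrite -(inj_eq (@complexI R)) -cmodE normr_eq0.
Qed.
Lemma cmodR (a : R) : 0 <= a -> cmod (a%:C)%C = a.
Proof. by move=> a0; apply: (@complexI R); rewrite -cmodE ger0_norm // ler0c. Qed.
Lemma cmod_sum (I : finType) (v : I -> R[i]) (p : I -> R) :
  (forall k, 0 <= p k) ->
  cmod (\sum_k v k * (p k)%:C%C) <= \sum_k cmod (v k) * p k.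
Proof.
move=> pp; rewrite -lecR -cmodE rmorph_sum /=.
apply: (le_trans (ler_norm_sum _ _ _)); apply: ler_sum => k _.
by rewrite normrM cmodE rmorphM /= ger0_norm // ler0c.
Qed.
End CM.

Section PF.
Variables (R : realType) (n : nat).
Implicit Types (P Q : 'M[R]_n) (x y : 'rV[R]_n).

Lemma rsubE (a : R) (u w : 'rV[R]_n) j : (a *: u - w) 0 j = a * u 0 j - w 0 j.
Proof. by rewrite !mxE. Qed.
Lemma raddE (a : R) (u w : 'rV[R]_n) j : (u + a *: w) 0 j = u 0 j + a * w 0 j.
Proof. by rewrite !mxE. Qed.

Lemma rsubE2 (a : R) (u w : 'rV[R]_n) j : (w - a *: u) 0 j = w 0 j - a * u 0 j.
Proof. by rewrite !mxE. Qed.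

Lemma raddE2 (a : R) (u w : 'rV[R]_n) j : (a *: u + w) 0 j = a * u 0 j + w 0 j.
Proof. by rewrite !mxE. Qed.

Lemma rscaleE (a : R) (u : 'rV[R]_n) j : (a *: u) 0 j = a * u 0 j.
Proof. by rewrite !mxE. Qed.

Definition posv x := forall j, 0 < x 0 j.
Definition nnv x := forall j, 0 <= x 0 j.
Definition inG P t := exists x, posv x /\ forall j, (x *m P) 0 j < t * x 0 j.

Lemma nz_pos y : nnv y -> y != 0 -> exists j, 0 < y 0 j.
Proof.
move=> yn ny; case: (pickP (fun j => 0 < y 0 j)) => [j hj|h]; first by exists j.
case/eqP: ny; apply/rowP => j; rewrite !mxE; apply/eqP.
by rewrite eq_le yn andbT leNgt h.
Qed.

Lemma mulmx_le y1 y2 P j : nonneg_mx P -> (forall k, y1 0 k <= y2 0 k) ->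
  (y1 *m P) 0 j <= (y2 *m P) 0 j.
Proof.
move=> hP hy; rewrite !mxE; apply: ler_sum => k _; exact: ler_wpM2r.
Qed.

Lemma mulmx_nn y P j : nonneg_mx P -> nnv y -> 0 <= (y *m P) 0 j.
Proof. by move=> hP hy; rewrite mxE sumr_ge0 // => k _; rewrite mulr_ge0. Qed.

Lemma ratio_le P x y s t : nonneg_mx P -> posv x -> nnv y -> y != 0 ->
  (forall j, s * y 0 j <= (y *m P) 0 j) ->
  (forall j, (x *m P) 0 j < t * x 0 j) -> s < t.
Proof.
move=> hP hx hy ny hs ht.
have [j0 hj0] := nz_pos hy ny.
have [i Hi] := exists_argmax j0 (fun j => y 0 j / x 0 j).
set c := y 0 i / x 0 i.
have cp : 0 < c by apply: lt_le_trans (Hi j0); rewrite divr_gt0.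
have yle : forall k, y 0 k <= (c *: x) 0 k.
  move=> k; rewrite mxE -ler_pdivrMr //; exact: Hi.
have yi : y 0 i = c * x 0 i by rewrite /c divfK // gt_eqF.
have h1 := mulmx_le i hP yle.
rewrite -scalemxAl [X in _ <= X]mxE in h1.
have h2 := hs i; have h3 := ht i.
have yip : 0 < y 0 i by rewrite yi mulr_gt0.
have : s * y 0 i < t * y 0 i.
  apply: (le_lt_trans h2); apply: (le_lt_trans h1);
  by rewrite yi mulrCA ltr_pM2l.
by rewrite ltr_pM2r.
Qed.

Lemma cratio_le P y (v : 'rV[R[i]]_n) z tau : nonneg_mx P -> posv y -> v != 0 ->
  v *m cmx P = z *: v -> (forall j, (y *m P) 0 j <= tau * y 0 j) -> cmod z <= tau.
Proof.
move=> hP hy nv hv ht.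
pose a : 'rV[R]_n := \row_k cmod (v 0 k).
have an : nnv a by move=> j; rewrite mxE cmod_ge0.
have na : a != 0.
  apply: contra nv => /eqP a0; apply/eqP/rowP => k.
  by move/rowP: a0 => /(_ k); rewrite !mxE => /eqP; rewrite cmod_eq0 => /eqP.
have [j0 hj0] := nz_pos an na.
have [i Hi] := exists_argmax j0 (fun j => a 0 j / y 0 j).
set c := a 0 i / y 0 i.
have cp : 0 < c by apply: lt_le_trans (Hi j0); rewrite divr_gt0.
have ale : forall k, a 0 k <= (c *: y) 0 k.
  move=> k; rewrite [(c *: y) 0 k]mxE -ler_pdivrMr //; exact: Hi.
have ai : a 0 i = c * y 0 i by rewrite /c divfK // gt_eqF.
have h1 := mulmx_le i hP ale.
rewrite -scalemxAl [X in _ <= X]mxE in h1.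
have aip : 0 < a 0 i by rewrite ai mulr_gt0.
have h2 : cmod z * a 0 i <= (a *m P) 0 i.
  have := congr1 (fun M : 'rV[R[i]]_n => M 0 i) hv; rewrite [in X in X = _]mxE mxE => e.
  rewrite [a 0 i]mxE -cmodM -e [(a *m P) 0 i]mxE.
  have -> : \sum_j v 0 j * cmx P j i = \sum_j v 0 j * (P j i)%:C%C.
    by apply: eq_bigr => k _; rewrite mxE.
  apply: (le_trans (cmod_sum _ _)) => [k|]; first exact: hP.
  by apply: ler_sum => k _; rewrite mxE.
have : cmod z * a 0 i <= tau * a 0 i.
  apply: (le_trans h2); apply: (le_trans h1).
  by rewrite ai mulrCA ler_pM2l // ht.
by rewrite ler_pM2r.
Qed.

Variable n0 : (0 < n)%N.
Let j0 : 'I_n := Ordinal n0.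

Lemma inG_pos P t : nonneg_mx P -> inG P t -> 0 < t.
Proof.
move=> hP [x [hx ht]]; have := ht j0; have := mulmx_nn j0 hP (fun j => ltW (hx j)).
move=> h1 h2; have : 0 < t * x 0 j0 by exact: le_lt_trans h2.
by rewrite pmulr_lgt0.
Qed.

Lemma inG_up P t t' : inG P t -> t <= t' -> inG P t'.
Proof.
move=> [x [hx ht]] tt; exists x; split => // j.
by apply: (lt_le_trans (ht j)); rewrite ler_wpM2r // ltW.
Qed.

Lemma inG_open P t : inG P t -> exists2 t', t' < t & inG P t'.
Proof.
move=> [x [hx ht]].
have [i Hi] := exists_argmax j0 (fun j => (x *m P) 0 j / x 0 j).
set m := (x *m P) 0 i / x 0 i.
have mt : m < t by rewrite /m ltr_pdivrMr.
exists ((m + t) / 2); first lra.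
exists x; split => // j.
have : (x *m P) 0 j / x 0 j <= m by apply: Hi.
rewrite ler_pdivrMr // => h; apply: (le_lt_trans h).
by rewrite ltr_pM2r //; lra.
Qed.

Lemma inG_ex P : nonneg_mx P -> exists t, inG P t.
Proof.
move=> hP; exists (1 + \sum_k \sum_j P k j); exists (const_mx 1); split.
  by move=> j; rewrite mxE.
move=> j; rewrite mxE mxE mulr1.
have : \sum_k (const_mx 1 : 'rV[R]_n) 0 k * P k j <= \sum_k \sum_j P k j.
  apply: ler_sum => k _; rewrite mxE mul1r (bigD1 j) //=.
  by rewrite lerDl sumr_ge0.
lra.
Qed.

Lemma inG_unit P t : nonneg_mx P -> inG P t -> (t%:M - P) \in unitmx.
Proof.
move=> hP hG; have tp := inG_pos hP hG.
move: (hG) => [x [hx ht]].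
rewrite unitmxE unitfE; apply/negP => /det0P [v nv hv].
pose a : 'rV[R]_n := \row_k `|v 0 k|.
have an : nnv a by move=> j; rewrite mxE normr_ge0.
have na : a != 0.
  apply: contra nv => /eqP a0; apply/eqP/rowP => k.
  by move/rowP: a0 => /(_ k); rewrite !mxE => /eqP; rewrite normr_eq0 => /eqP.
have vP : v *m P = t *: v.
  by apply/eqP; rewrite eq_sym -subr_eq0 -mul_mx_scalar -mulmxBr hv.
suff : t < t by rewrite ltxx.
apply: (ratio_le hP hx an na _ ht) => j.
have := congr1 (fun M : 'rV[R]_n => M 0 j) vP; rewrite [in X in _ = X]mxE => e.
rewrite [a 0 j]mxE -[t]ger0_norm; last exact: ltW.
rewrite -normrM -e mxE [(a *m P) 0 j]mxE.
apply: (le_trans (ler_norm_sum _ _ _)); apply: ler_sum => k _.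
by rewrite normrM mxE [`|P k j|]ger0_norm.
Qed.

Lemma inG_inv_nn P t b : nonneg_mx P -> inG P t -> nnv b ->
  nnv (b *m invmx (t%:M - P)).
Proof.
move=> hP hG hb; have tp := inG_pos hP hG; have hu := inG_unit hP hG.
move: (hG) => [x [hx ht]].
set y := b *m invmx _.
have hy : y *m (t%:M - P) = b by rewrite /y -mulmxA mulVmx // mulmx1.
case: (pickP (fun j => y 0 j < 0)) => [j hj|h]; last first.
  by move=> j; rewrite leNgt h.
have [i Hi] := exists_argmin j0 (fun j => y 0 j / x 0 j).
set c := y 0 i / x 0 i.
have cn : c < 0 by apply: le_lt_trans (Hi j) _; rewrite pmulr_llt0 ?invr_gt0.
have yge : forall k, (c *: x) 0 k <= y 0 k.
  move=> k; rewrite mxE -ler_pdivlMr //; exact: Hi.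
have yi : y 0 i = c * x 0 i by rewrite /c divfK // gt_eqF.
have h1 := mulmx_le i hP yge.
rewrite -scalemxAl [X in X <= _]mxE in h1.
have e : t * y 0 i = b 0 i + (y *m P) 0 i.
  have := congr1 (fun M : 'rV[R]_n => M 0 i) hy; rewrite mulmxBr mul_mx_scalar.
  have -> : (t *: y - y *m P) 0 i = t * y 0 i - (y *m P) 0 i by rewrite !mxE.
  move=> <-; ring.
have h2 : c * (t * x 0 i) < c * (x *m P) 0 i by rewrite ltr_nM2l.
have h3 : t * y 0 i < (y *m P) 0 i.
  by rewrite yi mulrCA; exact: lt_le_trans h2 h1.
exfalso; have := hb i; lra.
Qed.

Lemma inv_nn P t : nonneg_mx P -> inG P t -> nonneg_mx (invmx (t%:M - P)).
Proof.
move=> hP hG l k.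
have hb : nnv ('e_l : 'rV[R]_n) by move=> j; rewrite mxE ler0n.
by have := inG_inv_nn hP hG hb k; rewrite -rowE mxE.
Qed.

Definition tau P := inf [set t | inG P t].

Section Tau.
Variable P : 'M[R]_n.
Hypothesis hP : nonneg_mx P.

Lemma G_lb : has_lbound [set t | inG P t].
Proof. by exists 0 => t /= h; apply: ltW; exact: inG_pos hP h. Qed.

Lemma G_ne : [set t | inG P t] !=set0.
Proof. have [t h] := inG_ex hP; by exists t. Qed.

Lemma tau_le t : inG P t -> tau P <= t.
Proof. by move=> h; apply: (ge_inf G_lb). Qed.

Lemma tau_notin : ~ inG P (tau P).
Proof.
move=> /inG_open [t' lt h]; have := tau_le h; rewrite leNgt lt //.
Qed.

Lemma tau_lt t : inG P t -> tau P < t.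
Proof.
move=> h; rewrite lt_neqAle tau_le // andbT; apply/eqP => e.
by apply: tau_notin; rewrite e.
Qed.

Lemma lt_tau t : tau P < t -> inG P t.
Proof.
move=> /(inf_lt G_ne) [t' h lt]; apply: (inG_up h); exact: ltW.
Qed.

Lemma tau_ge s : (forall t, inG P t -> s < t) -> s <= tau P.
Proof. by move=> h; apply: lb_le_inf G_ne _ => t /h /ltW. Qed.

Lemma tau_ge0 : 0 <= tau P.
Proof. apply: tau_ge => t; exact: inG_pos. Qed.

Lemma tau_sing : \det ((tau P)%:M - P) = 0.
Proof.
apply/eqP; apply: contraT => nd.
set T := tau P.
have hu : (T%:M - P) \in unitmx by rewrite unitmxE unitfE.
set o : 'rV[R]_n := const_mx 1.
set xT := o *m invmx (T%:M - P).
have hxT : xT *m (T%:M - P) = o by rewrite /xT -mulmxA mulVmx // mulmx1.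
have xTn : nnv xT.
  case: (pickP (fun j => xT 0 j < 0)) => [i hi|h]; last first.
    by move=> j; rewrite leNgt h.
  exfalso.
  set m := 1 + \sum_k `|xT 0 k|.
  have mp : 0 < m by rewrite /m ltr_pwDl // sumr_ge0.
  have mge : forall k, - m <= xT 0 k.
    move=> k.
    have s1 : `|xT 0 k| <= \sum_k `|xT 0 k|.
      by rewrite (bigD1 k) //= lerDl sumr_ge0.
    have := ler_norm (- xT 0 k); rewrite normrN /m; lra.
  set t := T + (2 * m)^-1.
  have tT : T < t by rewrite /t ltrDl invr_gt0 mulr_gt0.
  have hG := lt_tau tT.
  have hut := inG_unit hP hG.
  set N := invmx (t%:M - P).
  have Nn : nonneg_mx N := inv_nn hP hG.
  set xt := o *m N.
  have xtn : nnv xt by apply: inG_inv_nn => // j; rewrite mxE.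
  have e1 : xT *m (t%:M - P) = o + (t - T) *: xT.
    have -> : t%:M - P = (T%:M - P) + (t - T)%:M.
      by apply/matrixP => a b; rewrite !mxE; case: (a == b) => /=; ring.
    by rewrite mulmxDr hxT mul_mx_scalar.
  have e2 : xT = xt + (t - T) *: (xT *m N).
    have := congr1 (fun M => M *m N) e1.
    by rewrite -mulmxA mulmxV // mulmx1 mulmxDl -scalemxAl.
  have h3 : - m * xt 0 i <= (xT *m N) 0 i.
    rewrite /xt !mxE mulr_sumr; apply: ler_sum => l _.
    by rewrite /o mxE mul1r; apply: ler_wpM2r; [exact: Nn|exact: mge].
  have tTe : t - T = (2 * m)^-1 by rewrite /t; ring.
  have : 0 <= xT 0 i.
    rewrite e2.
    have -> : (xt + (t - T) *: (xT *m N)) 0 i = xt 0 i + (t - T) * (xT *m N) 0 i.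
      by rewrite !mxE.
    rewrite tTe.
    have h4 : (2 * m)^-1 * (- m * xt 0 i) <= (2 * m)^-1 * (xT *m N) 0 i.
      by rewrite ler_wpM2l // invr_ge0 mulr_ge0 // ltW.
    have h5 : (2 * m)^-1 * (- m * xt 0 i) = - (xt 0 i / 2).
      by field; rewrite gt_eqF.
    have := xtn i; lra.
  by rewrite leNgt hi.
have e3 : forall j, T * xT 0 j = 1 + (xT *m P) 0 j.
  move=> j; have := congr1 (fun M : 'rV[R]_n => M 0 j) hxT.
  rewrite mulmxBr mul_mx_scalar.
  rewrite rsubE => h; have : o 0 j = 1 by rewrite mxE.
  lra.
have Tp : 0 < T.
  rewrite lt_neqAle tau_ge0 andbT; apply/eqP => T0.
  have := e3 j0; rewrite -T0 mul0r; have := mulmx_nn j0 hP xTn; lra.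
suff : False by [].
apply: tau_notin; exists xT; split.
  move=> j; have := e3 j; have := mulmx_nn j hP xTn => h1 h2.
  have : 0 < T * xT 0 j by lra.
  by rewrite pmulr_rgt0.
move=> j; have := e3 j; lra.
Qed.
End Tau.

Lemma pow_nn P k : nonneg_mx P -> nonneg_mx (P ^+ k).
Proof.
move=> hP; elim: k => [|k IH] i j; first by rewrite expr0 mxE ler0n.
rewrite exprS -mulmxE mxE sumr_ge0 // => l _; exact: mulr_ge0.
Qed.

Lemma rowmx_ge y P i j : nonneg_mx P -> nnv y -> y 0 i * P i j <= (y *m P) 0 j.
Proof.
move=> hP hy; rewrite mxE (bigD1 i) //= lerDl sumr_ge0 // => l _.
exact: mulr_ge0.
Qed.

Section Irr.
Variable P : 'M[R]_n.
Hypothesis hP : nonneg_mx P.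
Hypothesis hirr : irreducible_mx P.

Let kk (i j : 'I_n) : nat := xchoose (hirr i j).
Let mE : nat := (\max_(ij : 'I_n * 'I_n) kk ij.1 ij.2).+1.
Let E : 'M[R]_n := \sum_(k < mE) P ^+ k.

Lemma E_pos u : nnv u -> u != 0 -> posv (u *m E).
Proof.
move=> hu nu j; have [i hi] := nz_pos hu nu.
have hk : (kk i j < mE)%N.
  rewrite ltnS; exact: (leq_bigmax (F := fun ij : 'I_n * 'I_n => kk ij.1 ij.2) (i, j)).
rewrite /E mulmx_sumr summxE (bigD1 (Ordinal hk)) //=.
have h1 : 0 < (u *m P ^+ kk i j) 0 j.
  apply: lt_le_trans (rowmx_ge i j (pow_nn _ hP) hu).
  by rewrite mulr_gt0 //; exact: (xchooseP (hirr i j)).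
apply: (lt_le_trans h1); rewrite lerDl sumr_ge0 // => k _.
exact: mulmx_nn (pow_nn _ hP) hu.
Qed.

Lemma E_comm : E *m P = P *m E.
Proof.
rewrite /E mulmx_suml mulmx_sumr; apply: eq_bigr => k _.
by rewrite !mulmxE -exprSr exprS.
Qed.

Lemma pow_eig y (t : R) k : y *m P = t *: y -> y *m P ^+ k = t ^+ k *: y.
Proof.
move=> h; elim: k => [|k IH]; first by rewrite expr0 mulmx1 scale1r.
by rewrite exprSr -mulmxE mulmxA IH -scalemxAl h scalerA -exprSr.
Qed.

Lemma pf_irr : exists y, posv y /\ y *m P = tau P *: y.
Proof.
set T := tau P.
have T0 : 0 <= T := tau_ge0 hP.
have /eqP/det0P [v nv hv] := tau_sing hP.
have vP : v *m P = T *: v.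
  by apply/eqP; rewrite eq_sym -subr_eq0 -mul_mx_scalar -mulmxBr hv.
pose a : 'rV[R]_n := \row_k `|v 0 k|.
have an : nnv a by move=> j; rewrite mxE normr_ge0.
have na : a != 0.
  apply: contra nv => /eqP a0; apply/eqP/rowP => k.
  by move/rowP: a0 => /(_ k); rewrite !mxE => /eqP; rewrite normr_eq0 => /eqP.
have aP : forall j, T * a 0 j <= (a *m P) 0 j.
  move=> j; have := congr1 (fun M : 'rV[R]_n => M 0 j) vP; rewrite [in X in _ = X]mxE => e.
  rewrite [a 0 j]mxE -[T]ger0_norm // -normrM -e mxE [(a *m P) 0 j]mxE.
  apply: (le_trans (ler_norm_sum _ _ _)); apply: ler_sum => k _.
  by rewrite normrM mxE [`|P k j|]ger0_norm.
set d := a *m P - T *: a.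
have dn : nnv d by move=> j; rewrite /d rsubE2 subr_ge0; exact: aP.
have [d0|nd] := eqVneq d 0.
  have aP' : a *m P = T *: a by apply/eqP; rewrite -subr_eq0 -/d d0.
  exists a; split => // j.
  rewrite lt_neqAle an andbT; apply/eqP => aj.
  have [i hi] := nz_pos an na.
  have := rowmx_ge i j (pow_nn (kk i j) hP) an.
  rewrite (pow_eig _ aP') rscaleE -aj mulr0 => h.
  have := xchooseP (hirr i j) => /= h2.
  by have := mulr_gt0 hi h2; rewrite ltNge h.
exfalso.
set w := a *m E.
have wp := E_pos an na.
have dEp := E_pos dn nd.
have wP : w *m P = T *: w + d *m E.
  rewrite /w -mulmxA E_comm mulmxA.
  have -> : a *m P = d + T *: a by rewrite /d subrK.
  by rewrite mulmxDl -scalemxAl addrC.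
have [i Hi] := exists_argmin j0 (fun j => (d *m E) 0 j / w 0 j).
set eps := (d *m E) 0 i / w 0 i.
have ep : 0 < eps by rewrite divr_gt0.
have : T + eps <= T.
  apply: (tau_ge hP) => t hG; move: (hG) => [x [hx ht]].
  apply: (ratio_le hP hx (fun j => ltW (wp j)) _ _ ht).
    by apply/negP => /eqP w0; have := wp j0; rewrite w0 mxE ltxx.
  move=> j; rewrite wP raddE2 mulrDl lerD2l.
  by rewrite -ler_pdivlMr //; exact: Hi.
by rewrite gerDl leNgt ep.
Qed.

Lemma sub_inG z s : nnv z -> z != 0 -> (forall j, (z *m P) 0 j <= s * z 0 j) ->
  z *m P != s *: z -> inG P s.
Proof.
move=> zn nz hz ne.
set d := s *: z - z *m P.
have dn : nnv d by move=> j; rewrite /d rsubE subr_ge0.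
have nd : d != 0 by rewrite /d subr_eq0 eq_sym.
set w := z *m E.
have wp := E_pos zn nz.
have dEp := E_pos dn nd.
have wP : w *m P = s *: w - d *m E.
  rewrite /w -mulmxA E_comm mulmxA.
  have -> : z *m P = s *: z - d by rewrite /d opprB addrC subrK.
  by rewrite mulmxBl -scalemxAl.
exists w; split => // j; rewrite wP rsubE.
have := dEp j; lra.
Qed.
End Irr.

Lemma spec_rad_tau P : nonneg_mx P -> irreducible_mx P -> spec_rad P = tau P.
Proof.
move=> hP hirr; have [y [yp yP]] := pf_irr hP hirr.
rewrite /spec_rad.
set S := [set r : R | exists z : R[i], eigenvalue (cmx P) z /\ r = cmod z].
have Sub : forall r, S r -> r <= tau P.
  move=> r [z [/eigenvalueP [v hv nv] ->]].
  apply: (cratio_le hP yp nv hv) => j; by rewrite yP rscaleE.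
have Tin : S (tau P).
  exists (tau P)%:C%C; split; last by rewrite cmodR // tau_ge0.
  apply/eigenvalueP; exists (map_mx (real_complex R) y).
    apply/rowP => j; rewrite !mxE.
    under eq_bigr do rewrite !mxE -rmorphM.
    rewrite -rmorph_sum -rmorphM; congr (_%:C)%C.
    by rewrite -rscaleE -yP mxE.
  apply/negP => /eqP/rowP/(_ j0); rewrite !mxE => e.
  have : y 0 j0 = 0 by apply: (@complexI R); rewrite e.
  by have := yp j0; move=> /gt_eqF /eqP.
apply/le_anti/andP; split.
  by apply: ge_sup; [exists (tau P) | move=> r /Sub].
by apply: ub_le_sup => //; exists (tau P) => r /Sub.
Qed.

Lemma le_tau P y s : nonneg_mx P -> nnv y -> y != 0 ->
  (forall j, s * y 0 j <= (y *m P) 0 j) -> s <= tau P.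
Proof.
move=> hP hy ny hs; apply: (tau_ge hP) => t [x [hx ht]].
exact: ratio_le hP hx hy ny hs ht.
Qed.

Lemma lt_tau_strict P y s : nonneg_mx P -> posv y ->
  (forall j, s * y 0 j < (y *m P) 0 j) -> s < tau P.
Proof.
move=> hP hy hs.
have [i Hi] := exists_argmin j0 (fun j => ((y *m P) 0 j - s * y 0 j) / y 0 j).
set e := ((y *m P) 0 i - s * y 0 i) / y 0 i.
have ep : 0 < e by rewrite divr_gt0 // subr_gt0.
have : s + e <= tau P.
  apply: (le_tau hP (fun j => ltW (hy j))).
    by apply/negP => /eqP w0; have := hy j0; rewrite w0 mxE ltxx.
  move=> j; have := Hi j; rewrite -/e ler_pdivlMr // => h.
  rewrite mulrDl; lra.
by apply: lt_le_trans; rewrite ltrDl.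
Qed.
End PF.

Section MxAux.
Variables (R : realType) (n : nat).
Implicit Types (A B C : 'M[R]_n).
Definition mle A B := forall i j, A i j <= B i j.

Lemma nnM A B : nonneg_mx A -> nonneg_mx B -> nonneg_mx (A *m B).
Proof. move=> hA hB i j; rewrite mxE sumr_ge0 // => k _; exact: mulr_ge0. Qed.

Lemma entry_ge A B i k j : nonneg_mx A -> nonneg_mx B -> A i k * B k j <= (A *m B) i j.
Proof.
move=> hA hB; rewrite mxE (bigD1 k) //= lerDl sumr_ge0 // => l _.
exact: mulr_ge0.
Qed.

Lemma mle_mulr A B C : nonneg_mx C -> mle A B -> mle (A *m C) (B *m C).
Proof. by move=> hC h i j; rewrite !mxE; apply: ler_sum => k _; rewrite ler_wpM2r. Qed.

Lemma mle_mull C A B : nonneg_mx C -> mle A B -> mle (C *m A) (C *m B).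
Proof. by move=> hC h i j; rewrite !mxE; apply: ler_sum => k _; rewrite ler_wpM2l. Qed.

Lemma mle_mul2 A1 A2 B1 B2 : nonneg_mx A1 -> nonneg_mx B1 -> mle A1 A2 -> mle B1 B2 ->
  mle (A1 *m B1) (A2 *m B2).
Proof.
move=> hA hB hAA hBB i j; rewrite !mxE; apply: ler_sum => k _; exact: ler_pM.
Qed.

Lemma pos_mulB A B : (forall i j, 0 < A i j) -> nonneg_mx B ->
  (forall j, exists i, B i j != 0) -> forall i j, 0 < (A *m B) i j.
Proof.
move=> hA hB hc i j; have [k hk] := hc j.
apply: lt_le_trans (entry_ge i k j (fun a b => ltW (hA a b)) hB).
by rewrite mulr_gt0 // lt_neqAle eq_sym hk hB.
Qed.

Lemma diag_pos (l : 'rV[R]_n) (X : 'M[R]_n) : (forall j, 0 < l 0 j) -> (forall i j, 0 < X i j) ->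
  forall i j, 0 < (diag_mx l *m X) i j.
Proof. by move=> hl hX i j; rewrite mul_diag_mx mxE mulr_gt0. Qed.

Lemma diag_nn (l : 'rV[R]_n) : (forall j, 0 <= l 0 j) -> nonneg_mx (diag_mx l).
Proof. by move=> hl i j; rewrite mxE; case: (i == j); rewrite /= ?mulr1n ?mulr0n. Qed.

Lemma pow_mono A B k : nonneg_mx A -> mle A B -> mle (A ^+ k) (B ^+ k).
Proof.
move=> hA hAB; elim: k => [|k IH]; first by move=> i j; rewrite !expr0.
rewrite !exprS -!mulmxE; apply: mle_mul2 => //; exact: pow_nn.
Qed.

Lemma vle_mx (x : 'rV[R]_n) A B j : nnv x -> mle A B -> (x *m A) 0 j <= (x *m B) 0 j.
Proof. by move=> hx h; rewrite !mxE; apply: ler_sum => k _; rewrite ler_wpM2l. Qed.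
End MxAux.

Section Main.
Variables (R : realType) (n : nat).
Hypothesis hn : (2 <= n)%N.
Variables (A K B : 'M[R]_n) (delta l : 'rV[R]_n) (rA : R).
Hypotheses (hA : nonneg_mx A) (hK : nonneg_mx K) (hK0 : K != 0)
  (hdelta : forall j, 0 < delta 0 j <= 1) (hl : forall j, 0 < l 0 j)
  (hB : nonneg_mx B) (hBcol : forall j, exists i, B i j != 0)
  (hirr : irreducible_mx (A + K *m diag_mx delta))
  (hrA : 0 < rA) (hrAdef : spec_rad (A + K *m diag_mx delta + rA *: K) = 1).

Let n0 : (0 < n)%N := ltnW hn.
Let j0 : 'I_n := Ordinal n0.
Let At := A + K *m diag_mx delta.
Let L := diag_mx l.
Let Q r := At + r *: K.
Let N r := invmx (1%:M - Q r).
Let M r := Mfun L At K B r.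

Lemma At_nn : nonneg_mx At.
Proof.
move=> i j; rewrite /At mul_mx_diag !mxE; apply: addr_ge0 => //.
by apply: mulr_ge0 => //; have /andP[/ltW] := hdelta j.
Qed.

Lemma Q_nn r : 0 <= r -> nonneg_mx (Q r).
Proof.
move=> r0 i j; rewrite /Q mxE [(r *: K) i j]mxE; apply: addr_ge0; first exact: At_nn.
exact: mulr_ge0.
Qed.

Lemma Q_irr r : 0 <= r -> irreducible_mx (Q r).
Proof.
move=> r0 i j; have [k hk] := hirr i j; exists k.
apply: lt_le_trans hk _; apply: pow_mono; first exact: At_nn.
by move=> a b; rewrite /Q !mxE lerDl mulr_ge0.
Qed.

Lemma K_ex : exists a b, 0 < K a b.
Proof.
case: (pickP (fun ab : 'I_n * 'I_n => 0 < K ab.1 ab.2)) => [[a b] h|h].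
  by exists a, b.
case/eqP: hK0; apply/matrixP => a b; rewrite mxE; apply/eqP.
by rewrite eq_le hK andbT leNgt (h (a, b)).
Qed.

Lemma zA_ex : exists z, posv z /\ z *m Q rA = z.
Proof.
have hQ := Q_nn (ltW hrA).
have [z [zp zP]] := pf_irr n0 hQ (Q_irr (ltW hrA)).
exists z; split => //; rewrite zP.
by rewrite -(spec_rad_tau n0 hQ (Q_irr (ltW hrA))) /Q hrAdef scale1r.
Qed.

Lemma Q_inG r : 0 <= r < rA -> inG (Q r) 1.
Proof.
move=> /andP [r0 rlt].
have [z [zp zP]] := zA_ex.
have zn : nnv z by move=> j; exact: ltW.
have nz : z != 0 by apply/negP => /eqP z0; have := zp j0; rewrite z0 mxE ltxx.
have e : z *m Q r = z - (rA - r) *: (z *m K).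
  have -> : Q r = Q rA - (rA - r) *: K.
    by apply/matrixP => a b; rewrite /Q !mxE; ring.
  by rewrite mulmxBr zP -scalemxAr.
have hc : forall j, 0 <= (z *m K) 0 j by move=> j; exact: mulmx_nn.
apply: (sub_inG (Q_nn r0) (Q_irr r0) zn nz).
  move=> j; rewrite e mul1r rsubE2.
  have := hc j; have : 0 < rA - r by rewrite subr_gt0.
  move=> h1 h2; have := mulr_ge0 (ltW h1) h2; lra.
have zK0 : z *m K != 0.
  have [a [b hab]] := K_ex.
  apply/negP => /eqP zK0.
  have := rowmx_ge a b hK zn; rewrite zK0 mxE => h.
  by have := mulr_gt0 (zp a) hab; rewrite ltNge h.
rewrite e scale1r; apply/negP => /eqP h.
have := congr1 (fun v => z - v) h; rewrite opprB addrC subrK subrr.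
move/eqP; rewrite scaler_eq0 subr_eq0 (gt_eqF rlt) (negbTE zK0).
done.
Qed.

Lemma ME r : M r = L *m N r *m B.
Proof. by rewrite /M /Mfun /N /Q /At [in RHS]opprD addrA. Qed.

Section Rng.
Variable r : R.
Hypothesis hr : 0 <= r < rA.
Let r0 : 0 <= r. Proof. by case/andP: hr. Qed.

Lemma N_unit : (1%:M - Q r) \in unitmx.
Proof. have h := inG_unit n0 (Q_nn r0) (Q_inG hr). exact h. Qed.

Lemma N_nn : nonneg_mx (N r).
Proof. exact (inv_nn n0 (Q_nn r0) (Q_inG hr)). Qed.

Lemma N_eq : N r = 1%:M + Q r *m N r.
Proof.
have h := mulmxV N_unit; rewrite mulmxBl mul1mx in h.
by rewrite -[in RHS]h subrK.
Qed.

Lemma N_ge_pow k : mle (Q r ^+ k) (N r).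
Proof.
have hQN : nonneg_mx (Q r *m N r) := nnM (Q_nn r0) N_nn.
have h1 : forall i j, (Q r *m N r) i j <= N r i j.
  move=> i j; rewrite [in X in _ <= X]N_eq [in X in _ <= X]mxE lerDr mxE.
  by case: (i == j); rewrite /= ?mulr1n ?mulr0n.
elim: k => [|k IH] i j.
  rewrite expr0 [in X in _ <= X]N_eq [in X in _ <= X]mxE lerDl; exact: hQN.
rewrite exprS -mulmxE; apply: le_trans (h1 i j).
exact: mle_mull (Q_nn r0) IH i j.
Qed.

Lemma N_pos i j : 0 < N r i j.
Proof.
have [k hk] := Q_irr r0 i j; exact: lt_le_trans hk (N_ge_pow k i j).
Qed.

Lemma M_pos i j : 0 < M r i j.
Proof.
rewrite ME; apply: pos_mulB => //; apply: diag_pos => //; exact: N_pos.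
Qed.

Lemma M_nn : nonneg_mx (M r).
Proof. by move=> i j; apply: ltW; exact: M_pos. Qed.

Lemma M_irr : irreducible_mx (M r).
Proof. by move=> i j; exists 1%N; rewrite expr1 M_pos. Qed.

Lemma rho_tau : spec_rad (M r) = tau (M r).
Proof. exact (spec_rad_tau n0 M_nn M_irr). Qed.
End Rng.

Lemma N_res r1 r2 : 0 <= r1 < rA -> 0 <= r2 < rA ->
  N r2 = N r1 + (r2 - r1) *: (N r1 *m K *m N r2).
Proof.
move=> h1 h2.
have e : (1%:M - Q r1) - (1%:M - Q r2) = (r2 - r1) *: K.
  by apply/matrixP => a b; rewrite /Q !mxE; ring.
have : N r1 *m ((1%:M - Q r1) - (1%:M - Q r2)) *m N r2 = N r2 - N r1.
  rewrite mulmxBr mulmxBl mulVmx; last exact: N_unit.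
  by rewrite mul1mx -mulmxA mulmxV ?mulmx1 //; exact: N_unit.
rewrite e -scalemxAr -scalemxAl => ->.
by rewrite addrC subrK.
Qed.

Let D r1 r2 := L *m (N r1 *m K *m N r2) *m B.

Lemma M_res r1 r2 : 0 <= r1 < rA -> 0 <= r2 < rA ->
  M r2 = M r1 + (r2 - r1) *: D r1 r2.
Proof.
move=> h1 h2; rewrite !ME (N_res h1 h2) mulmxDr mulmxDl /D.
by rewrite -scalemxAr -scalemxAl.
Qed.

Lemma D_nn r1 r2 : 0 <= r1 < rA -> 0 <= r2 < rA -> nonneg_mx (D r1 r2).
Proof.
move=> h1 h2; apply: nnM; last exact: hB.
apply: nnM; first by apply: diag_nn => j; exact: ltW.
by apply: nnM; [apply: nnM; [exact: N_nn|exact: hK]|exact: N_nn].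
Qed.

Lemma D_pos r1 r2 : 0 <= r1 < rA -> 0 <= r2 < rA -> forall i j, 0 < D r1 r2 i j.
Proof.
move=> h1 h2; apply: pos_mulB => //; apply: diag_pos => // i j.
have [a [b hab]] := K_ex.
have e1 := entry_ge i a b (N_nn h1) hK.
have e2 := entry_ge i b j (nnM (N_nn h1) hK) (N_nn h2).
apply: lt_le_trans e2; rewrite mulr_gt0 //; last exact: N_pos.
by apply: lt_le_trans e1; rewrite mulr_gt0 //; exact: N_pos.
Qed.

Lemma N_mono r1 r2 : 0 <= r1 -> r1 <= r2 -> r2 < rA -> mle (N r1) (N r2).
Proof.
move=> h0 h12 h2.
have h1' : 0 <= r1 < rA by rewrite h0 (le_lt_trans h12 h2).
have h2' : 0 <= r2 < rA by rewrite (le_trans h0 h12) h2.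
move=> i j; rewrite (N_res h1' h2') [X in _ <= X]mxE lerDl mxE mulr_ge0 //.
  by rewrite subr_ge0.
by apply: nnM; [apply: nnM; [exact: N_nn|exact: hK]|exact: N_nn].
Qed.

Lemma D_bound r1 r2 r0 : 0 <= r1 -> r1 <= r0 -> r2 <= r0 -> 0 <= r2 -> r0 < rA ->
  mle (D r1 r2) (D r0 r0).
Proof.
move=> h1 h10 h20 h2 h0.
have h1' : 0 <= r1 < rA by rewrite h1 (le_lt_trans h10 h0).
have h2' : 0 <= r2 < rA by rewrite h2 (le_lt_trans h20 h0).
have h0' : 0 <= r0 < rA by rewrite (le_trans h1 h10) h0.
rewrite /D; apply: mle_mulr => //; apply: mle_mull.
  by apply: diag_nn => j; exact: ltW.
apply: mle_mul2; first by apply: nnM; [exact: N_nn|exact: hK].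
- exact: N_nn.
- apply: mle_mulr => //; exact: N_mono.
- exact: N_mono.
Qed.

Lemma vecM_res (y : 'rV[R]_n) r1 r2 j : 0 <= r1 < rA -> 0 <= r2 < rA ->
  (y *m M r2) 0 j = (y *m M r1) 0 j + (r2 - r1) * (y *m D r1 r2) 0 j.
Proof.
move=> h1 h2; rewrite (M_res h1 h2) mulmxDr -scalemxAr; exact: raddE.
Qed.

Lemma T_strict r1 r2 : 0 <= r1 -> r1 < r2 -> r2 < rA -> tau (M r1) < tau (M r2).
Proof.
move=> h0 h12 h2.
have h1' : 0 <= r1 < rA by rewrite h0 (lt_trans h12 h2).
have h2' : 0 <= r2 < rA by rewrite (le_trans h0 (ltW h12)) h2.
have [y [yp yM]] := pf_irr n0 (M_nn h1') (M_irr h1').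
apply: (lt_tau_strict n0 (M_nn h2') yp) => j.
rewrite (vecM_res _ _ h1' h2') yM rscaleE ltrDl mulr_gt0 ?subr_gt0 //.
apply: lt_le_trans (rowmx_ge j0 j (D_nn h1' h2') (fun k => ltW (yp k))).
by rewrite mulr_gt0 // D_pos.
Qed.

Lemma T_mono r1 r2 : 0 <= r1 -> r1 <= r2 -> r2 < rA -> tau (M r1) <= tau (M r2).
Proof.
move=> h0 h12 h2; case: (eqVneq r1 r2) => [->//|ne].
by apply: ltW; apply: T_strict => //; rewrite lt_neqAle ne.
Qed.

Lemma cont_up (a b : R) (x : 'rV[R]_n) : 0 <= a -> a < b -> b < rA -> posv x ->
  (forall j, (x *m M a) 0 j < x 0 j) -> exists r, [/\ a < r, r < b & inG (M r) 1].
Proof.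
move=> ha hab hb hx hxa.
have xn : nnv x by move=> j; exact: ltW.
have hbb : 0 <= b < rA by rewrite hb andbT; apply: ltW; exact: le_lt_trans hab.
have haa : 0 <= a < rA by rewrite ha (lt_trans hab hb).
have [d [dp db hd]] := small_delta (g := fun j => x 0 j - (x *m M a) 0 j)
   (D := fun j => (x *m D b b) 0 j) (h := b - a)
   (fun j => ltac:(by rewrite subr_gt0)) (fun j => mulmx_nn j (D_nn hbb hbb) xn)
   ltac:(by rewrite subr_gt0).
have hr : 0 <= a + d < rA.
  apply/andP; split; [apply: addr_ge0 => //; exact: ltW | lra].
exists (a + d); split; first by rewrite ltrDl.
  by rewrite -ltrBrDl.
exists x; split => // j; rewrite mul1r (vecM_res _ _ haa hr) (_ : a + d - a = d); last by ring.
have h1 : (x *m D a (a + d)) 0 j <= (x *m D b b) 0 j.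
  apply: vle_mx => //; apply: D_bound; lra.
have h2 := hd j; have h3 : d * (x *m D a (a + d)) 0 j <= d * (x *m D b b) 0 j.
  by rewrite ler_wpM2l // ltW.
simpl in h2; lra.
Qed.

Lemma cont_down (a : R) (y : 'rV[R]_n) (s : R) : 0 < a -> a < rA -> posv y ->
  (forall j, s * y 0 j < (y *m M a) 0 j) ->
  exists r, [/\ 0 <= r, r < a & s <= tau (M r)].
Proof.
move=> ha har hy hya.
have yn : nnv y by move=> j; exact: ltW.
have haa : 0 <= a < rA by rewrite (ltW ha) har.
have [d [dp da hd]] := small_delta (g := fun j => (y *m M a) 0 j - s * y 0 j)
   (D := fun j => (y *m D a a) 0 j) (h := a)
   (fun j => ltac:(by rewrite subr_gt0)) (fun j => mulmx_nn j (D_nn haa haa) yn) ha.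
have hr : 0 <= a - d < rA.
  by rewrite subr_ge0 ltW //=; apply: le_lt_trans har; rewrite lerBlDr lerDl ltW.
exists (a - d); split; first by case/andP: hr.
  by rewrite ltrBlDr ltrDl.
apply: (le_tau (M_nn hr) yn).
  by apply/negP => /eqP y0; have := hy j0; rewrite y0 mxE ltxx.
move=> j; have e := vecM_res y j hr haa.
have h1 : (y *m D (a - d) a) 0 j <= (y *m D a a) 0 j.
  apply: vle_mx => //; apply: D_bound; lra.
have h2 := hd j; have h3 : d * (y *m D (a - d) a) 0 j <= d * (y *m D a a) 0 j.
  by rewrite ler_wpM2l // ltW.
have e2 : a - (a - d) = d by ring.
rewrite e2 in e; simpl in h2; lra.
Qed.

Lemma blowup : exists r0 : R, [/\ 0 < r0, r0 < rA & 1 <= tau (M r0)].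
Proof.
have [z [zp zQ]] := zA_ex.
have zn : nnv z by move=> j; exact: ltW.
set c := z *m K.
have cn : nnv c by move=> j; exact: mulmx_nn.
have c0 : c != 0.
  have [a [b hab]] := K_ex.
  apply/negP => /eqP zK0.
  have := rowmx_ge a b hK zn; rewrite -/c zK0 mxE => h.
  by have := mulr_gt0 (zp a) hab; rewrite ltNge h.
pose y : 'rV[R]_n := \row_j (c 0 j / l 0 j).
have yL : y *m L = c.
  by apply/rowP => j; rewrite /L mul_mx_diag !mxE divfK // gt_eqF.
have yn : nnv y by move=> j; rewrite mxE divr_ge0 // ltW.
have y0 : y != 0.
  have [j hj] := nz_pos cn c0.
  have : 0 < y 0 j by rewrite mxE divr_gt0.
  by apply: contraL => /eqP ->; rewrite mxE ltxx.
have zB : forall j, 0 < (z *m B) 0 j.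
  move=> j; have [i hi] := hBcol j.
  apply: lt_le_trans (rowmx_ge i j hB zn).
  by rewrite mulr_gt0 // lt_neqAle eq_sym hi hB.
have [d [dp da hd]] := small_delta (g := fun j => (z *m B) 0 j)
   (D := fun j => y 0 j) (h := rA) zB yn hrA.
have hr : 0 <= rA - d < rA.
  apply/andP; split; lra.
exists (rA - d); split; [lra | lra |].
have ez : z = (rA - (rA - d)) *: (c *m N (rA - d)).
  have e : z *m (1%:M - Q (rA - d)) = (rA - (rA - d)) *: c.
    have -> : Q (rA - d) = Q rA - (rA - (rA - d)) *: K.
      by apply/matrixP => a b; rewrite /Q !mxE; ring.
    by rewrite mulmxBr mulmx1 mulmxBr zQ opprB addrC subrK -scalemxAr.
  have := congr1 (fun v => v *m N (rA - d)) e.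
  rewrite -mulmxA mulmxV ?mulmx1; last exact: N_unit.
  by rewrite -scalemxAl.
have e2 : rA - (rA - d) = d by ring.
rewrite e2 in ez.
apply: (le_tau (M_nn hr) yn y0) => j.
rewrite ME !mulmxA yL.
have -> : c *m N (rA - d) = d^-1 *: z.
  by rewrite [in RHS]ez scalerA mulVf ?gt_eqF // scale1r.
rewrite -scalemxAl rscaleE mul1r.
have := hd j; simpl.
move=> h; rewrite ler_pdivlMl //; exact: ltW.
Qed.

Lemma rsubE0 (u v : 'rV[R]_n) j : (u - v) 0 j = u 0 j - v 0 j.
Proof. by rewrite !mxE. Qed.

Lemma main_sec (hM0 : spec_rad (M 0) < 1) : exists rs : R,
    [/\ 0 < rs < rA,
        spec_rad (M rs) = 1,
        (forall r, 0 < r < rA -> spec_rad (M r) = 1 -> r = rs),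
        (forall r, 0 <= r < rs -> spec_rad (M r) < 1) &
        (forall r, rs < r < rA ->
           1 < spec_rad (M r) /\
           ~ (exists w : 'cV[R]_n,
                (forall j, 0 < w j 0) /\
                (forall j, 0 <= (w^T *m (1%:M - M r)) 0 j)))].
Proof.
have h0 : (0:R) <= 0 < rA by rewrite lexx hrA.
have T0 : tau (M 0) < 1 by rewrite -(rho_tau h0).
have [r0 [r0p r0A Tr0]] := blowup.
pose S := [set r : R | 0 <= r /\ r < rA /\ tau (M r) < 1].
have S0 : S 0 by split; [exact: lexx | split].
have Sub : forall r, S r -> r < r0.
  move=> r [rp [rA' Tr]]; rewrite ltNge; apply/negP => h.
  have := T_mono (ltW r0p) h rA'; lra.
have hS : has_sup S by split; [exists 0 | exists r0 => r /Sub /ltW].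
set rs := sup S.
have rs_ub : forall r, S r -> r <= rs by move=> r Sr; apply: ub_le_sup => //; case: hS.
have rs_r0 : rs <= r0 by apply: ge_sup; [exists 0 | move=> r /Sub /ltW].
have below : forall r, 0 <= r -> r < rs -> tau (M r) < 1.
  move=> r r0' rrs; have [r' [r'p [r'A Tr']] rr'] := sup_gt (ex_intro _ 0 S0) rrs.
  by apply: le_lt_trans Tr'; apply: T_mono => //; exact: ltW.
have inG1 : forall r (x : 'rV[R]_n), (forall j, (x *m M r) 0 j < 1 * x 0 j) ->
    forall j, (x *m M r) 0 j < x 0 j.
  by move=> r x h j; rewrite -[x 0 j]mul1r.
have rs_pos : 0 < rs.
  have [x [xp hx]] := lt_tau (M_nn h0) T0.
  have [r [rp rr0 hG]] := cont_up (lexx 0) r0p r0A xp (inG1 _ _ hx).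
  have Tr : tau (M r) < 1 by apply: (tau_lt n0 (M_nn _) hG); rewrite (ltW rp) (lt_trans rr0 r0A).
  have Sr : S r by split; [exact: ltW rp | split => //; exact: lt_trans rr0 r0A].
  exact: lt_le_trans rp (rs_ub r Sr).
have rsA : rs < rA by exact: le_lt_trans rs_r0 r0A.
have hrs : 0 <= rs < rA by rewrite (ltW rs_pos) rsA.
have Trs : tau (M rs) = 1.
  apply/le_anti/andP; split.
    rewrite leNgt; apply/negP => T1.
    have [y [yp yM]] := pf_irr n0 (M_nn hrs) (M_irr hrs).
    have [r [rp rrs Tr]] := cont_down rs_pos rsA yp
      (s := 1) (fun j => ltac:(by rewrite yM rscaleE ltr_pM2r // mul1r)).
    by have := below r rp rrs; rewrite ltNge Tr.
  rewrite leNgt; apply/negP => T1.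
  have [x [xp hx]] := lt_tau (M_nn hrs) T1.
  have rsr0 : rs < r0.
    rewrite lt_neqAle rs_r0 andbT; apply/eqP => e.
    by move: T1; rewrite e ltNge Tr0.
  have [r [rp rr0 hG]] := cont_up (ltW rs_pos) rsr0 r0A xp (inG1 _ _ hx).
  have hr : 0 <= r < rA by rewrite (le_trans (ltW rs_pos) (ltW rp)) (lt_trans rr0 r0A).
  have Tr : tau (M r) < 1 by exact: (tau_lt n0 (M_nn hr) hG).
  have Sr : S r by case/andP: hr => a b; split => //; split.
  by have := rs_ub r Sr; rewrite leNgt rp.
have above : forall r, rs < r -> r < rA -> 1 < tau (M r).
  by move=> r h1 h2; rewrite -Trs; apply: T_strict => //; exact: ltW.
exists rs; split.
- by rewrite rs_pos rsA.
- by rewrite (rho_tau hrs).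
- move=> r /andP [rp rA'] hr; rewrite (rho_tau (r:=r)) ?(ltW rp) // in hr.
  case: (ltgtP r rs) => // h.
    by have := below r (ltW rp) h; rewrite hr ltxx.
  by have := above r h rA'; rewrite hr ltxx.
- move=> r /andP [rp h]; rewrite (rho_tau (r:=r)); first exact: below.
  by rewrite rp (lt_trans h rsA).
move=> r /andP [h1 h2].
have hr : 0 <= r < rA by rewrite (le_trans (ltW rs_pos) (ltW h1)) h2.
rewrite (rho_tau hr); split; first exact: above.
move=> [w [wp hw]].
have Tr := above r h1 h2.
suff : tau (M r) < tau (M r) by rewrite ltxx.
apply: (tau_lt n0 (M_nn hr)); exists w^T; split.
  by move=> j; rewrite mxE.
move=> j; have := hw j; rewrite mulmxBr mulmx1 rsubE0 subr_ge0 => h.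
apply: le_lt_trans h _; rewrite ltr_pMl //; first by rewrite mxE.
Qed.
End Main.

End Dev.
Import Dev.

Theorem mainTheorem9 (R : realType) (n : nat) (hn : (2 <= n)%N)
  (A K B : 'M[R]_n) (delta l : 'rV[R]_n) (rA : R)
  (hA : nonneg_mx A) (hK : nonneg_mx K) (hK0 : K != 0)
  (hdelta : forall j, 0 < delta 0 j <= 1)
  (hl : forall j, 0 < l 0 j)
  (hB : nonneg_mx B) (hBcol : forall j, exists i, B i j != 0)
  (hirr : irreducible_mx (A + K *m diag_mx delta))
  (hrho : spec_rad (A + K *m diag_mx delta) < 1)
  (hrA : 0 < rA) (hrAdef : spec_rad (A + K *m diag_mx delta + rA *: K) = 1)
  (hM0 : spec_rad (Mfun (diag_mx l) (A + K *m diag_mx delta) K B 0) < 1) :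
  let M := Mfun (diag_mx l) (A + K *m diag_mx delta) K B in
  exists rs : R,
    [/\ 0 < rs < rA,
        spec_rad (M rs) = 1,
        (forall r, 0 < r < rA -> spec_rad (M r) = 1 -> r = rs),
        (forall r, 0 <= r < rs -> spec_rad (M r) < 1) &
        (forall r, rs < r < rA ->
           1 < spec_rad (M r) /\
           ~ (exists w : 'cV[R]_n,
                (forall j, 0 < w j 0) /\
                (forall j, 0 <= (w^T *m (1%:M - M r)) 0 j)))].
Proof.
move=> M.
exact: (main_sec hn hA hK hK0 hdelta hl hB hBcol hirr hrA hrAdef hM0).
Qed.
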